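(* Let $k$ be a field, $\kappa$ an infinite cardinal and $R=k^\kappa$. Let $\mathcal{G}$ be the filter of ideals of $R$ with filter basis the principal ideals $aR$, where $a\in k^\kappa$ has cofinite support in $\kappa$ (this is a Gabriel filter of finite type), and let $A=k^{(\kappa)}\subseteq R$ (elements of finite support). Then $R/A$ is a silting $R$-module with $\operatorname{Gen}(R/A)=\operatorname{Div}\mathcal{G}$, and $R/A$ is finitely generated but not finitely presented (in particular not projective).
   Context: $\operatorname{Gen}T$: epimorphic images of direct sums of copies of $T$. For $\alpha:A\to B$, $\mathcal{D}_\alpha=\{X\mid\operatorname{Hom}_R(\alpha,X)\text{ surjective}\}$. A module $T$ is silting if it has a projective presentation $P_{-1}\xrightarrow{\sigma}P_0\to T\to0$ with $\operatorname{Gen}T=\mathcal{D}_\sigma$. $\operatorname{Div}\mathcal{G}=\{M\mid MI=M\ \forall I\in\mathcal{G}\}$. *)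

(* Defs.v *)
From HB Require Import structures.
From mathcomp Require Import all_boot all_algebra.
From Stdlib Require List.
From Stdlib Require Import FunctionalExtensionality ProofIrrelevance.

Set Implicit Arguments. Unset Strict Implicit. Unset Printing Implicit Defensive.
Import GRing.Theory.

Record SRing := {
  rcar :> Type;
  rzero : rcar; rone : rcar;
  radd : rcar -> rcar -> rcar; ropp : rcar -> rcar; rmul : rcar -> rcar -> rcar;
  raddA : forall x y z, radd x (radd y z) = radd (radd x y) z;
  raddC : forall x y, radd x y = radd y x;
  radd0 : forall x, radd rzero x = x;
  raddN : forall x, radd (ropp x) x = rzero;
  rmulA : forall x y z, rmul x (rmul y z) = rmul (rmul x y) z;
  rmul1l : forall x, rmul rone x = x;
  rmul1r : forall x, rmul x rone = x;
  rmulDl : forall x y z, rmul (radd x y) z = radd (rmul x z) (rmul y z);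
  rmulDr : forall x y z, rmul x (radd y z) = radd (rmul x y) (rmul x z) }.
Arguments rzero {s}. Arguments rone {s}. Arguments radd {s}. Arguments ropp {s}.
Arguments rmul {s}.

Record SMod (R : SRing) := {
  mcar :> Type;
  mzero : mcar; madd : mcar -> mcar -> mcar; mopp : mcar -> mcar;
  mscal : R -> mcar -> mcar;
  maddA : forall x y z, madd x (madd y z) = madd (madd x y) z;
  maddC : forall x y, madd x y = madd y x;
  madd0 : forall x, madd mzero x = x;
  maddN : forall x, madd (mopp x) x = mzero;
  mscalDr : forall r x y, mscal r (madd x y) = madd (mscal r x) (mscal r y);
  mscalDl : forall r s x, mscal (radd r s) x = madd (mscal r x) (mscal s x);
  mscalA : forall r s x, mscal (rmul r s) x = mscal r (mscal s x);
  mscal1 : forall x, mscal rone x = x }.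
Arguments mzero {R s0} : rename. Arguments madd {R s0} : rename.
Arguments mopp {R s0} : rename. Arguments mscal {R s0} : rename.

Section Generic.
Variable R : SRing.

Definition Rlinear (M N : SMod R) (f : M -> N) : Prop :=
  (forall x y, f (madd x y) = madd (f x) (f y)) /\
  (forall r x, f (mscal r x) = mscal r (f x)).

Definition Rsurjective (A B : Type) (f : A -> B) : Prop := forall y, exists x, f x = y.

Definition regmod : SMod R :=
  {| mcar := rcar R; mzero := rzero; madd := radd; mopp := ropp; mscal := rmul;
     maddA := @raddA R; maddC := @raddC R; madd0 := @radd0 R; maddN := @raddN R;
     mscalDr := @rmulDr R; mscalDl := @rmulDl R;
     mscalA := fun r s x => Logic.eq_sym (@rmulA R r s x); mscal1 := @rmul1l R |}.

Section DSum.
Variables (M : SMod R) (I : Type).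

Definition fsupp (f : I -> M) : Prop :=
  exists s : list I, forall i, ~ List.In i s -> f i = mzero.

Lemma sig_ext (A : Type) (P : A -> Prop) (x y : sig P) :
  proj1_sig x = proj1_sig y -> x = y.
Proof. destruct x as [x px], y as [y py]; simpl; intros ->; f_equal; apply proof_irrelevance. Qed.

Definition dcar := {f : I -> M | fsupp f}.

Lemma fsupp0 : fsupp (fun _ => mzero).
Proof. exists nil; auto. Qed.
Lemma fsuppD (f g : I -> M) : fsupp f -> fsupp g -> fsupp (fun i => madd (f i) (g i)).
Proof.
intros [s1 H1] [s2 H2]; exists (s1 ++ s2)%list; intros i Hi.
rewrite H1 ?H2 ?madd0 //; intro; apply: Hi; apply List.in_or_app; auto.
Qed.
Lemma fsuppN (f : I -> M) : fsupp f -> fsupp (fun i => mopp (f i)).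
Proof.
intros [s H]; exists s; intros i Hi; rewrite H //.
by rewrite -[LHS](madd0 (mopp (@mzero R M))) maddC maddN.
Qed.
Lemma fsuppZ r (f : I -> M) : fsupp f -> fsupp (fun i => mscal r (f i)).
Proof.
intros [s H]; exists s; intros i Hi; rewrite H //.
have h := mscalDr r (@mzero R M) mzero; rewrite madd0 in h.
have h2 := f_equal (madd (mopp (mscal r mzero))) h.
by rewrite maddN maddA maddN madd0 in h2.
Qed.

Definition dzero : dcar := exist _ _ fsupp0.
Definition dadd (x y : dcar) : dcar := exist _ _ (fsuppD (proj2_sig x) (proj2_sig y)).
Definition dopp (x : dcar) : dcar := exist _ _ (fsuppN (proj2_sig x)).
Definition dscal r (x : dcar) : dcar := exist _ _ (fsuppZ r (proj2_sig x)).

Ltac dext := intros; apply sig_ext; simpl; apply functional_extensionality; intro.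

Lemma daddA x y z : dadd x (dadd y z) = dadd (dadd x y) z. Proof. dext; apply maddA. Qed.
Lemma daddC x y : dadd x y = dadd y x. Proof. dext; apply maddC. Qed.
Lemma dadd0 x : dadd dzero x = x. Proof. dext; apply madd0. Qed.
Lemma daddN x : dadd (dopp x) x = dzero. Proof. dext; apply maddN. Qed.
Lemma dscalDr r x y : dscal r (dadd x y) = dadd (dscal r x) (dscal r y). Proof. dext; apply mscalDr. Qed.
Lemma dscalDl r s x : dscal (radd r s) x = dadd (dscal r x) (dscal s x). Proof. dext; apply mscalDl. Qed.
Lemma dscalA r s x : dscal (rmul r s) x = dscal r (dscal s x). Proof. dext; apply mscalA. Qed.
Lemma dscal1 x : dscal rone x = x. Proof. dext; apply mscal1. Qed.

Definition dsum : SMod R :=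
  {| mcar := dcar; mzero := dzero; madd := dadd; mopp := dopp; mscal := dscal;
     maddA := daddA; maddC := daddC; madd0 := dadd0; maddN := daddN;
     mscalDr := dscalDr; mscalDl := dscalDl; mscalA := dscalA; mscal1 := dscal1 |}.
End DSum.

Definition Gen (T X : SMod R) : Prop :=
  exists (I : Type) (g : dsum T I -> X), Rlinear g /\ Rsurjective g.

(* D_sigma = { X | Hom(sigma, X) Rsurjective } *)
Definition Dsig (A B : SMod R) (sigma : A -> B) (X : SMod R) : Prop :=
  forall h : A -> X, Rlinear h ->
    exists g : B -> X, Rlinear g /\ forall a, g (sigma a) = h a.

Definition projective (P : SMod R) : Prop :=
  forall (M N : SMod R) (g : M -> N) (h : P -> N),
    Rlinear g -> Rsurjective g -> Rlinear h ->
    exists h' : P -> M, Rlinear h' /\ forall x, g (h' x) = h x.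

Definition silting (T : SMod R) : Prop :=
  exists (P1 P0 : SMod R) (sigma : P1 -> P0) (eps : P0 -> T),
    Rlinear sigma /\ Rlinear eps /\ Rsurjective eps /\
    (forall y, eps y = mzero <-> exists x, sigma x = y) /\
    projective P1 /\ projective P0 /\
    (forall X : SMod R, Gen T X <-> Dsig sigma X).

Fixpoint rsum (n : nat) (f : nat -> R) : R :=
  match n with 0 => rzero | S n => radd (rsum n f) (f n) end.
Fixpoint mlc (M : SMod R) (n : nat) (c : nat -> R) (g : nat -> M) : M :=
  match n with 0 => mzero | S n => madd (mlc n c g) (mscal (c n) (g n)) end.

Definition finitely_generated (M : SMod R) : Prop :=
  exists (n : nat) (g : nat -> M), forall m : M, exists c, m = mlc n c g.

Definition finitely_presented (M : SMod R) : Prop :=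
  exists (n : nat) (g : nat -> M),
    (forall m : M, exists c, m = mlc n c g) /\
    exists (p : nat) (rels : nat -> nat -> R),
      (forall j, (j < p)%N -> mlc n (rels j) g = mzero) /\
      (forall c, mlc n c g = mzero ->
         exists s : nat -> R, forall i, (i < n)%N ->
           c i = rsum p (fun j => rmul (s j) (rels j i))).

Definition is_ideal (I : R -> Prop) : Prop :=
  I rzero /\ (forall x y, I x -> I y -> I (radd x y)) /\ (forall x, I x -> I (ropp x)) /\
  (forall r x, I x -> I (rmul r x) /\ I (rmul x r)).

Definition fg_ideal (I : R -> Prop) : Prop :=
  exists (n : nat) (g : nat -> R),
    forall x, I x <-> exists c : nat -> R, x = rsum n (fun i => rmul (g i) (c i)).

(* Gabriel filter (Stenstrom's axioms T1-T4, plus R in G) *)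
Definition gabriel_filter (G : (R -> Prop) -> Prop) : Prop :=
  (forall I, G I -> is_ideal I) /\
  G (fun _ => True) /\
  (forall I J, G I -> is_ideal J -> (forall x, I x -> J x) -> G J) /\
  (forall I J, G I -> G J -> G (fun x => I x /\ J x)) /\
  (forall I a, G I -> G (fun r => I (rmul a r))) /\
  (forall I J, G I -> is_ideal J -> (forall a, I a -> G (fun r => J (rmul a r))) -> G J).

Definition finite_type (G : (R -> Prop) -> Prop) : Prop :=
  forall I, G I -> exists J, G J /\ fg_ideal J /\ (forall x, J x -> I x).

Definition MI_eq_M (M : SMod R) (I : R -> Prop) : Prop :=
  forall m : M, exists l : list (R * M),
    (forall p, List.In p l -> I (fst p)) /\
    m = List.fold_right (fun p acc => madd (mscal (fst p) (snd p)) acc) mzero l.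

Definition Div (G : (R -> Prop) -> Prop) (M : SMod R) : Prop :=
  forall I, G I -> MI_eq_M M I.

End Generic.

Section Prod.
Variables (K : Type) (k : fieldType).
Local Open Scope ring_scope.

Ltac fext := intros; apply functional_extensionality; intro.

Definition prodRing : SRing.
refine {| rcar := K -> k; rzero := fun _ => 0; rone := fun _ => 1;
          radd := fun f g i => f i + g i; ropp := fun f i => - f i;
          rmul := fun f g i => f i * g i |}; fext.
- by rewrite addrA.
- by rewrite addrC.
- by rewrite add0r.
- by rewrite addNr.
- by rewrite mulrA.
- by rewrite mul1r.
- by rewrite mulr1.
- by rewrite mulrDl.
- by rewrite mulrDr.
Defined.

Definition infinite_type (X : Type) : Prop := ~ exists s : list X, forall x, List.In x s.

Definition finite_support (a : K -> k) : Prop :=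
  exists s : list K, forall x, ~ List.In x s -> a x = 0.
Definition cofinite_support (a : K -> k) : Prop :=
  exists s : list K, forall x, ~ List.In x s -> a x != 0.

Definition Gcof (I : prodRing -> Prop) : Prop :=
  is_ideal I /\ exists a : prodRing, cofinite_support a /\ forall r, I (rmul a r).
End Prod.

(* Main.v *)
Require Import Defs.
From mathcomp Require Import all_boot all_algebra.
From Stdlib Require Import ClassicalEpsilon Classical FunctionalExtensionality ProofIrrelevance Permutation.
From Stdlib Require List.
Import List (In, in_or_app).
Set Implicit Arguments. Unset Strict Implicit. Unset Printing Implicit Defensive.
Import GRing.Theory.
Notation dec := excluded_middle_informative.

Module Part1.


Section ModLemmas.
Variable R : SRing.
Variable M : SMod R.
Lemma madd0r (x : M) : madd x mzero = x.
Proof. by rewrite maddC madd0. Qed.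
Lemma madd_cancel (a x y : M) : madd a x = madd a y -> x = y.
Proof.
move=> h; have := f_equal (madd (mopp a)) h.
by rewrite !maddA maddN !madd0.
Qed.
Lemma mscalr0 r : mscal r (@mzero R M) = mzero.
Proof.
apply: (@madd_cancel (mscal r mzero)); rewrite -mscalDr !madd0r //.
Qed.
Lemma mscal0r (x : M) : mscal rzero x = mzero.
Proof.
apply: (@madd_cancel (mscal rzero x)); rewrite -mscalDl madd0r radd0 //.
Qed.
Lemma maddACA (a b c d : M) : madd (madd a b) (madd c d) = madd (madd a c) (madd b d).
Proof.
by rewrite -!maddA (maddA b c d) (maddC b c) -(maddA c b d).
Qed.
End ModLemmas.

Lemma lin0 (R : SRing) (M N : SMod R) (f : M -> N) : Rlinear f -> f mzero = mzero.
Proof.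
move=> [fa _]; apply: (@madd_cancel _ _ (f mzero)).
by rewrite -fa !madd0r.
Qed.

Section Sum.
Variables (R : SRing) (N : SMod R) (I V : Type) (z : V) (psi : I -> V -> N).
Hypothesis psi0 : forall i, psi i z = mzero.

Definition upd (f : I -> V) (i : I) (v : V) : I -> V :=
  fun j => if dec (j = i) then v else f j.

Fixpoint Ssum (s : list I) (f : I -> V) : N :=
  match s with nil => mzero | i :: s' => madd (psi i (f i)) (Ssum s' (upd f i z)) end.

Lemma Ssum_zero s : Ssum s (fun _ => z) = mzero.
Proof.
elim: s => //= i s IH.
have -> : upd (fun _ => z) i z = (fun _ => z).
  by apply: functional_extensionality => j; rewrite /upd; case: dec.
by rewrite IH psi0 madd0.
Qed.

Lemma Ssum_swap x y s f : Ssum (x :: y :: s) f = Ssum (y :: x :: s) f.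
Proof.
rewrite /=.
case: (dec (x = y)) => [<-|nxy].
  have -> : upd f x z x = z by rewrite /upd; case: dec.
  have -> : upd (upd f x z) x z = upd f x z.
    by apply: functional_extensionality => j; rewrite /upd; case: dec.
  by rewrite psi0.
have -> : upd f x z y = f y by rewrite /upd; case: dec => // e; case: nxy.
have -> : upd f y z x = f x by rewrite /upd; case: dec.
have -> : upd (upd f x z) y z = upd (upd f y z) x z.
  by apply: functional_extensionality => j; rewrite /upd; do 2 case: dec.
by rewrite !maddA (maddC (psi x (f x))).
Qed.

Lemma Ssum_perm s t : Permutation s t -> forall f, Ssum s f = Ssum t f.
Proof.
elim => //.
- by move=> x l l' _ IH f /=; rewrite IH.
- by move=> x y l f; rewrite Ssum_swap.
- by move=> l l' l'' _ IH1 _ IH2 f; rewrite IH1 IH2.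
Qed.

Definition vanish (f : I -> V) (s : list I) := forall j, ~ In j s -> f j = z.

Lemma Ssum_app s t f : vanish f s -> Ssum (s ++ t) f = Ssum s f.
Proof.
elim: s f => [|i s IH] f /= hv.
  have -> : f = (fun _ => z) by apply: functional_extensionality => j; apply: hv.
  by rewrite !Ssum_zero.
rewrite IH //.
move=> j hj; rewrite /upd; case: dec => // nji; apply: hv.
by move=> [e|h]; [apply: nji|apply: hj].
Qed.

Lemma Ssum_indep s t f : vanish f s -> vanish f t -> Ssum s f = Ssum t f.
Proof.
move=> hs ht; rewrite -(Ssum_app t hs) -(Ssum_app s ht).
apply: Ssum_perm; apply: Permutation_app_comm.
Qed.

Lemma vanish_app1 f s t : vanish f s -> vanish f (s ++ t).
Proof. by move=> h j hj; apply: h => hh; apply: hj; apply: in_or_app; left. Qed.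
Lemma vanish_app2 f s t : vanish f t -> vanish f (s ++ t).
Proof. by move=> h j hj; apply: h => hh; apply: hj; apply: in_or_app; right. Qed.

Lemma Ssum_add (vadd : V -> V -> V) (hz : vadd z z = z)
  (hadd : forall i u v, psi i (vadd u v) = madd (psi i u) (psi i v)) s f g :
  Ssum s (fun j => vadd (f j) (g j)) = madd (Ssum s f) (Ssum s g).
Proof.
elim: s f g => [|i s IH] f g /=; first by rewrite madd0.
have -> : upd (fun j => vadd (f j) (g j)) i z = (fun j => vadd (upd f i z j) (upd g i z j)).
  by apply: functional_extensionality => j; rewrite /upd; case: dec.
by rewrite IH hadd maddACA.
Qed.

Lemma Ssum_scal (lam : I -> V -> V) r (hz : forall i, lam i z = z)
  (hs : forall i v, psi i (lam i v) = mscal r (psi i v)) s f :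
  Ssum s (fun j => lam j (f j)) = mscal r (Ssum s f).
Proof.
elim: s f => [|i s IH] f /=; first by rewrite mscalr0.
have -> : upd (fun j => lam j (f j)) i z = (fun j => lam j (upd f i z j)).
  by apply: functional_extensionality => j; rewrite /upd; case: dec => // ->.
by rewrite IH hs mscalDr.
Qed.
End Sum.

Lemma Ssum_map (R : SRing) (N N' : SMod R) (I V : Type) (z : V) (psi : I -> V -> N)
  (G : N -> N') : Rlinear G -> forall s f,
  G (Ssum z psi s f) = Ssum z (fun i v => G (psi i v)) s f.
Proof.
move=> hG; elim => [|i s IH] f /=; first exact: lin0.
by rewrite (proj1 hG) IH.
Qed.

End Part1.
Import Part1.

Module Part2.
Local Open Scope ring_scope.

Section B.
Variables (K : Type) (k : fieldType) (J : Type) (phi : J -> K).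
Notation R := (prodRing K k).

Lemma rmulE (f g : R) x : rmul f g x = f x * g x. Proof. by []. Qed.
Lemma raddE (f g : R) x : radd f g x = f x + g x. Proof. by []. Qed.
Lemma roppE (f : R) x : ropp f x = - f x. Proof. by []. Qed.
Lemma rzeroE x : (rzero : R) x = 0. Proof. by []. Qed.
Lemma roneE x : (rone : R) x = 1. Proof. by []. Qed.

Definition fsuppJ (f : J -> k) := exists s : list J, forall j, ~ In j s -> f j = 0.
Definition Bcar := {f : J -> k | fsuppJ f}.

Lemma fsJ0 : fsuppJ (fun _ => 0). Proof. by exists nil. Qed.
Lemma fsJD f g : fsuppJ f -> fsuppJ g -> fsuppJ (fun j => f j + g j).
Proof.
move=> [s1 h1] [s2 h2]; exists (s1 ++ s2)%list => j hj.
rewrite h1 ?h2 ?addr0 // => hh; apply: hj; apply: in_or_app; auto.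
Qed.
Lemma fsJN f : fsuppJ f -> fsuppJ (fun j => - f j).
Proof. by move=> [s h]; exists s => j hj; rewrite h ?oppr0. Qed.
Lemma fsJZ (r : R) f : fsuppJ f -> fsuppJ (fun j => r (phi j) * f j).
Proof. by move=> [s h]; exists s => j hj; rewrite h ?mulr0. Qed.

Definition Bzero : Bcar := exist _ _ fsJ0.
Definition Badd (x y : Bcar) : Bcar := exist _ _ (fsJD (proj2_sig x) (proj2_sig y)).
Definition Bopp (x : Bcar) : Bcar := exist _ _ (fsJN (proj2_sig x)).
Definition Bscal (r : R) (x : Bcar) : Bcar := exist _ _ (fsJZ r (proj2_sig x)).

Ltac bext := intros; apply sig_ext; simpl; apply functional_extensionality; intro.

Definition Bmod : SMod R.
refine {| mcar := Bcar; mzero := Bzero; madd := Badd; mopp := Bopp; mscal := Bscal |};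
 bext.
- by rewrite addrA.
- by rewrite addrC.
- by rewrite add0r.
- by rewrite addNr.
- by rewrite mulrDr.
- by rewrite mulrDl.
- by rewrite mulrA.
- by rewrite mul1r.
Defined.

Definition upd0 (j : J) (c : k) : J -> k := upd (fun _ => 0) j c.
Lemma fsJupd0 j c : fsuppJ (upd0 j c).
Proof.
exists [:: j] => i hi; rewrite /upd0 /upd; case: dec => // e; case: hi; subst; by left.
Qed.
Definition Bsingle j c : Bmod := exist _ _ (fsJupd0 j c).
Lemma fsJupd f i : fsuppJ f -> fsuppJ (upd f i 0).
Proof. by move=> [s h]; exists s => j hj; rewrite /upd; case: dec => //; rewrite h. Qed.

Definition ex (x : K) (c : k) : R := fun y => if dec (y = x) then c else 0.

Lemma B_proj : projective Bmod.
Proof.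
move=> M N g h gl gs hl.
pose m j := proj1_sig (constructive_indefinite_description _ (gs (h (Bsingle j 1)))).
have hm j : g (m j) = h (Bsingle j 1).
  exact: (proj2_sig (constructive_indefinite_description _ (gs (h (Bsingle j 1))))).
pose psi j c := mscal (ex (phi j) c) (m j).
have psi0 j : psi j 0 = mzero.
  rewrite /psi; have -> : ex (phi j) 0 = rzero.
    by apply: functional_extensionality => y; rewrite /ex; case: dec.
  exact: mscal0r.
pose lst (f : Bmod) := proj1_sig (constructive_indefinite_description _ (proj2_sig f)).
have hlst (f : Bmod) : vanish 0 (proj1_sig f) (lst f).
  exact: (proj2_sig (constructive_indefinite_description _ (proj2_sig f))).
pose h' (f : Bmod) := Ssum 0 psi (lst f) (proj1_sig f).
exists h'; split; [split|].
- move=> f1 f2; rewrite /h'.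
  have v1 := hlst f1; have v2 := hlst f2.
  have v12 : vanish 0 (proj1_sig (madd f1 f2)) (lst f1 ++ lst f2).
    move=> j hj /=; rewrite v1 ?v2 ?addr0 // => hh; apply: hj; apply: in_or_app; auto.
  rewrite (Ssum_indep psi0 (hlst (madd f1 f2)) v12) /=.
  rewrite (Ssum_add (vadd := fun a b => a + b)) ?addr0 //; last first.
    move=> i u v; rewrite /psi -mscalDl; f_equal.
    by apply: functional_extensionality => y; rewrite /ex /=; case: (dec (y = phi i)) => ?; rewrite ?addr0.
  congr madd; apply: Ssum_indep => //.
    exact: vanish_app1.
  exact: vanish_app2.
- move=> r f; rewrite /h'.
  have vf := hlst f.
  have v : vanish 0 (proj1_sig (mscal r f)) (lst f).
    by move=> j hj /=; rewrite vf ?mulr0.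
  rewrite (Ssum_indep psi0 (hlst (mscal r f)) v) /=.
  apply: (Ssum_scal (lam := fun j c => r (phi j) * c)) => [i|i v'].
    by rewrite mulr0.
  rewrite /psi -mscalA; congr mscal.
  by apply: functional_extensionality => y; rewrite rmulE /ex; case: (dec (y = phi i)) => [e|ne] /=; [by rewrite e | by rewrite mulr0].
- move=> f; rewrite /h' (Ssum_map _ _ gl).
  have e1 j c : g (psi j c) = h (Bsingle j c).
    rewrite /psi (proj2 gl) hm -(proj2 hl); congr h; apply: sig_ext => /=.
    apply: functional_extensionality => i; rewrite /upd0 /upd /ex /=.
    case: (dec (i = j)) => [e|ne] /=; first subst i.
      by case: (dec (phi j = phi j)) => [ee|nn] /=; [rewrite mulr1 | case: nn].
    by rewrite mulr0.
  have -> : (fun (j : J) (c : k) => g (psi j c)) = (fun j c => h (Bsingle j c)).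
    by do 2 (apply: functional_extensionality => ?); apply: e1.
  move: (hlst f); move: (lst f) => s.
  case: f => f hf /=.
  elim: s f hf => [|i s IH] f hf hv /=.
    rewrite -(lin0 hl); congr h; apply: sig_ext => /=.
    by apply: functional_extensionality => j; rewrite hv.
  rewrite (IH _ (fsJupd i hf)); last first.
    move=> j hj; rewrite /upd; case: dec => // nji; apply: hv.
    by move=> [e|hh]; [apply: nji|apply: hj].
  rewrite -(proj1 hl); congr h; apply: sig_ext => /=.
  apply: functional_extensionality => j; rewrite /upd0 /upd.
  case: (dec (j = i)) => [e|ne] /=; first by subst j; rewrite addr0.
  by rewrite add0r.
Qed.
End B.

End Part2.
Import Part2.

Module Part3.
Local Open Scope ring_scope.

Section Filt.
Variables (K : Type) (k : fieldType).
Notation R := (prodRing K k).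

Lemma rmulC_R (a b : R) : rmul a b = rmul b a.
Proof. by apply: functional_extensionality => x; rewrite !rmulE mulrC. Qed.

Lemma cof_mul (a b : R) : cofinite_support a -> cofinite_support b ->
  cofinite_support (rmul a b).
Proof.
move=> [s1 h1] [s2 h2]; exists (s1 ++ s2)%list => x hx; rewrite rmulE mulf_neq0 //.
  by apply: h1 => hh; apply: hx; apply: in_or_app; auto.
by apply: h2 => hh; apply: hx; apply: in_or_app; auto.
Qed.

Lemma gab : gabriel_filter (@Gcof K k).
Proof.
split; [by move=> I []|split; [|split; [|split; [|split]]]].
- split.
    by split; [|split; [|split]].
  exists rone; split => //; exists nil => x _; rewrite roneE oner_neq0 //.
- move=> I J [_ [a [ca ha]]] hJ hIJ; split => //; exists a; split => // r; exact: hIJ.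
- move=> I J [[I0 [ID [IN IM]]] [a [ca ha]]] [[J0 [JD [JN JM]]] [b [cb hb]]].
  split.
    split; first by [].
    split; first by move=> x y [? ?] [? ?]; split; auto.
    split; first by move=> x [? ?]; split; auto.
    by move=> r x [hi hj]; have := IM r x hi; have := JM r x hj; tauto.
  exists (rmul a b); split; first exact: cof_mul.
  move=> r; split.
    by rewrite -rmulA.
  by rewrite (rmulC_R a b) -rmulA.
- move=> I a [[I0 [ID [IN IM]]] [b [cb hb]]].
  split.
    split.
      have -> : rmul a rzero = rzero by apply: functional_extensionality => x; rewrite rmulE mulr0.
      done.
    split; first by move=> x y hx hy; rewrite rmulDr; apply: ID.
    split.
      move=> x hx; have -> : rmul a (ropp x) = ropp (rmul a x).
        by apply: functional_extensionality => y; rewrite rmulE !roppE rmulE mulrN.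
      by apply: IN.
    move=> r x hx; split.
      rewrite rmulA (rmulC_R a r) -rmulA; exact: (proj1 (IM _ _ hx)).
    rewrite rmulA; exact: (proj2 (IM _ _ hx)).
  exists b; split => // r.
  by rewrite rmulA (rmulC_R a b) -rmulA; apply: hb.
- move=> I J [[I0 [ID [IN IM]]] [b [cb hb]]] hJ hIJ.
  have Ib : I b by move: (hb rone); rewrite rmul1r.
  have [_ [c [cc hc]]] := hIJ b Ib.
  split => //; exists (rmul b c); split; first exact: cof_mul.
  by move=> r; rewrite -rmulA.
Qed.

Lemma fintype_G : finite_type (@Gcof K k).
Proof.
move=> I [hI [a [ca ha]]].
exists (fun x => exists r, x = rmul a r); split; last split.
- split.
    split.
      exists rzero; apply: functional_extensionality => x; by rewrite rmulE mulr0.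
    split; first by move=> x y [r1 ->] [r2 ->]; exists (radd r1 r2); rewrite rmulDr.
    split.
      move=> x [r ->]; exists (ropp r); apply: functional_extensionality => y.
      by rewrite roppE !rmulE roppE mulrN.
    move=> r x [r1 ->]; split.
      by exists (rmul r r1); rewrite rmulA (rmulC_R r a) rmulA.
    by exists (rmul r1 r); rewrite rmulA.
  by exists a; split => // r; exists r.
- exists 1%N, (fun _ => a) => x; split.
    by move=> [r ->]; exists (fun _ => r); apply: functional_extensionality => y; rewrite /= add0r.
  by move=> [c ->]; exists (c 0%N); apply: functional_extensionality => y; rewrite /= add0r.
- by move=> x [r ->].
Qed.
End Filt.

End Part3.
Import Part3.

Module Part4.
Local Open Scope ring_scope.

Section Main.
Variables (k : fieldType) (K : Type) (HK : infinite_type K)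
    (T : SMod (prodRing K k)) (pi : regmod (prodRing K k) -> T)
    (pi_lin : Rlinear pi) (pi_surj : Rsurjective pi)
    (pi_ker : forall r, pi r = mzero <-> finite_support r).
Notation R := (prodRing K k).

Definition Ann (X : SMod R) := forall a : R, finite_support a -> forall m : X, mscal a m = mzero.

Lemma pi_eq (u v : R) : pi u = pi v -> finite_support (radd u (ropp v)).
Proof.
move=> e; apply/pi_ker; apply: (@madd_cancel _ _ (pi v)).
rewrite madd0r (maddC (pi v)) -(proj1 pi_lin).
change (pi (radd (radd u (ropp v)) v) = pi v).
have -> : radd (radd u (ropp v)) v = u.
  by apply: functional_extensionality => x /=; rewrite addrNK.
done.
Qed.

Lemma Ann_eq (X : SMod R) (hX : Ann X) (u v : R) (m : X) :
  finite_support (radd u (ropp v)) -> mscal u m = mscal v m.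
Proof.
move=> hf.
have e : u = radd (radd u (ropp v)) v.
  by apply: functional_extensionality => x /=; rewrite addrNK.
by rewrite {1}e mscalDl (hX _ hf m) madd0.
Qed.

Lemma fs_mul (a r : R) : finite_support a -> finite_support (rmul a r).
Proof. by move=> [s h]; exists s => x hx; rewrite rmulE h ?mul0r. Qed.

Lemma Gen_Ann X : Gen T X -> Ann X.
Proof.
move=> [I [g [gl gs]]] a ha m.
have [d <-] := gs m.
rewrite -(proj2 gl) -(lin0 gl); congr g.
apply: sig_ext; apply: functional_extensionality => i /=.
have [r <-] := pi_surj (proj1_sig d i).
rewrite -(proj2 pi_lin); apply/pi_ker; exact: fs_mul.
Qed.

Lemma Ann_Gen X : Ann X -> Gen T X.
Proof.
move=> hX.
pose pre (t : T) := proj1_sig (constructive_indefinite_description _ (pi_surj t)).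
have hpre t : pi (pre t) = t.
  exact: (proj2_sig (constructive_indefinite_description _ (pi_surj t))).
pose psi (i : X) (t : T) := mscal (pre t) i.
have wd (u v : R) (i : X) : pi u = pi v -> mscal u i = mscal v i.
  by move=> e; apply: (Ann_eq hX); exact: (pi_eq e).
have psi0 i : psi i mzero = mzero.
  rewrite /psi (wd _ rzero) ?mscal0r //; rewrite hpre; symmetry; exact: (lin0 pi_lin).
pose lst (d : dsum T X) := proj1_sig (constructive_indefinite_description _ (proj2_sig d)).
have hlst (d : dsum T X) : vanish mzero (proj1_sig d) (lst d).
  exact: (proj2_sig (constructive_indefinite_description _ (proj2_sig d))).
pose g (d : dsum T X) := Ssum mzero psi (lst d) (proj1_sig d).
exists (mcar X), g; split; [split|].
- move=> f1 f2; rewrite /g.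
  have v1 := hlst f1; have v2 := hlst f2.
  have v12 : vanish mzero (proj1_sig (madd f1 f2)) (lst f1 ++ lst f2).
    move=> j hj /=; rewrite v1 ?v2 ?madd0 // => hh; apply: hj; apply: in_or_app; auto.
  rewrite (Ssum_indep psi0 (hlst (madd f1 f2)) v12) /=.
  rewrite (Ssum_add (vadd := madd)) ?madd0 //; last first.
    move=> i u v; rewrite /psi -mscalDl; apply: wd.
    by rewrite (proj1 pi_lin) !hpre.
  congr madd; apply: Ssum_indep => //.
    exact: vanish_app1.
  exact: vanish_app2.
- move=> r f; rewrite /g.
  have vf := hlst f.
  have v : vanish mzero (proj1_sig (mscal r f)) (lst f).
    by move=> j hj /=; rewrite vf ?mscalr0.
  rewrite (Ssum_indep psi0 (hlst (mscal r f)) v) /=.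
  apply: (Ssum_scal (lam := fun _ => mscal r)) => [i|i v'].
    exact: mscalr0.
  rewrite /psi -mscalA; apply: wd.
  by rewrite (proj2 pi_lin) !hpre.
- move=> y.
  pose f := upd (fun _ : X => @mzero _ T) y (pi rone).
  have vf : vanish mzero f [:: y].
    move=> i hi; rewrite /f /upd; case: (dec (i = y)) => [e|ne] //=; exfalso; apply: hi; by left.
  have hf : fsupp f by exists [:: y].
  exists (exist _ f hf); rewrite /g.
  rewrite (Ssum_indep psi0 (hlst (exist _ f hf)) vf) /= madd0r /psi.
  have -> : f y = pi rone by rewrite /f /upd; case: dec.
  by rewrite (wd _ rone) ?mscal1 // hpre.
Qed.
End Main.

End Part4.
Import Part4.

Module Part5.
Local Open Scope ring_scope.

Section Main2.
Variables (k : fieldType) (K : Type).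
Notation R := (prodRing K k).

Lemma Div_Ann (X : SMod R) : Div (@Gcof K k) X -> Ann X.
Proof.
move=> hD a [s hs] m.
pose I := fun r : R => forall y, In y s -> r y = 0.
have hI : Gcof I.
  split.
    split; first by [].
    split; first by move=> x y hx hy z hz; rewrite raddE hx ?hy ?addr0.
    split; first by move=> x hx z hz; rewrite roppE hx ?oppr0.
    by move=> r x hx; split => z hz; rewrite rmulE hx ?mulr0 ?mul0r.
  exists (fun y => if dec (In y s) then 0 else 1); split.
    exists s => x hx /=; case: (dec (In x s)) => [h|h] //=; exact: oner_neq0.
  move=> r y hy; rewrite rmulE; case: (dec (In y s)) => [h|h] //=; first by rewrite mul0r.
have [l [hl ->]] := hD I hI m.
elim: l hl => [|[r m'] l IH] hl /=; first exact: mscalr0.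
rewrite mscalDr IH; last by move=> p hp; apply: hl; right.
rewrite -mscalA.
have -> : rmul a r = rzero.
  apply: functional_extensionality => y; rewrite rmulE rzeroE.
  case: (classic (In y s)) => hy.
    by have := hl (r, m') (or_introl erefl) y hy; rewrite /= => ->; rewrite mulr0.
  by rewrite hs // mul0r.
by rewrite mscal0r madd0.
Qed.

Lemma Ann_Div (X : SMod R) : Ann X -> Div (@Gcof K k) X.
Proof.
move=> hA I [hI [a [[s hs] ha]]] m.
pose u : R := fun y => if dec (In y s) then 0 else (a y)^-1.
exists [:: (rmul a u, m)]; split.
  by move=> p [<-|[]]; apply: ha.
rewrite /= madd0r.
have fs : finite_support (radd rone (ropp (rmul a u))).
  exists s => x hx; rewrite raddE roneE roppE rmulE /u.
  case: (dec (In x s)) => [h|h] //=; rewrite mulfV ?subrr //; exact: hs.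
have := Ann_eq hA m fs.
by rewrite mscal1 => <-.
Qed.
End Main2.

End Part5.
Import Part5.

Module Part6.
Local Open Scope ring_scope.

Section Main3.
Variables (k : fieldType) (K : Type) (HK : infinite_type K)
    (T : SMod (prodRing K k)) (pi : regmod (prodRing K k) -> T)
    (pi_lin : Rlinear pi) (pi_surj : Rsurjective pi)
    (pi_ker : forall r, pi r = mzero <-> finite_support r).
Notation R := (prodRing K k).

Lemma reg_proj : projective (regmod R).
Proof.
move=> M N g h gl gs hl.
have [m hm] := gs (h rone).
exists (fun r => mscal r m); split; [split|].
- by move=> x y; rewrite mscalDl.
- by move=> r x; rewrite -mscalA.
- move=> x; rewrite (proj2 gl) hm -(proj2 hl) /=.
  by congr h; apply: functional_extensionality => i; rewrite mulr1.
Qed.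

Notation P1 := (Bmod k (fun p : K * bool => p.1)).
Definition sig1 (f : P1) : regmod R := fun x => proj1_sig f (x, true).

Lemma silt : silting T.
Proof.
exists P1, (regmod R), sig1, pi.
split; [split => // |].
split => //; split => //.
split.
  move=> y; split.
    move=> /pi_ker [s hs].
    have hf : fsuppJ (fun p : K * bool => if p.2 then y p.1 else 0).
      exists (List.map (fun x => (x, true)) s) => [[x b]] hx /=.
      case: b hx => // hx; apply: hs => hh; apply: hx.
      by apply: (List.in_map (fun x => (x, true))).
    by exists (exist _ _ hf).
  move=> [[f [l hl]] <-]; apply/pi_ker.
  exists (List.map fst l) => x hx; rewrite /sig1 /=; apply: hl => hh; apply: hx.
  by apply: (List.in_map fst l (x, true)).
split; first exact: B_proj.
split; first exact: reg_proj.
move=> X; split.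
- move=> /(Gen_Ann pi_lin pi_surj pi_ker) hA h hl.
  exists (fun _ => mzero); split; [split|].
  + by move=> ? ?; rewrite madd0.
  + by move=> ? ?; rewrite mscalr0.
  + move=> b; case: b => [f [l hf]].
    pose a : R := fun x => if dec (In x (List.map fst l)) then 1 else 0.
    have fa : finite_support a.
      by exists (List.map fst l) => x hx; rewrite /a; case: (dec (In x (List.map fst l))).
    have -> : exist _ f (ex_intro _ l hf) = mscal a (exist _ f (ex_intro _ l hf) : P1).
      apply: sig_ext => /=; apply: functional_extensionality => p /=.
      rewrite /a; case: (dec (In p.1 (List.map fst l))) => [h1|h1] /=; first by rewrite mul1r.
      rewrite hf ?mulr0 // => hh; apply: h1; exact: List.in_map.
    by rewrite (proj2 hl) hA.
- move=> hD; apply: (Ann_Gen pi_lin pi_surj pi_ker).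
  move=> a [s hs] m.
  pose h (f : P1) := mscal ((fun x => proj1_sig f (x, false)) : R) m.
  have hl : Rlinear h.
    split.
      by move=> x y; rewrite /h -mscalDl.
    by move=> r x; rewrite /h -mscalA.
  have [g [gl hg]] := hD h hl.
  have hf : fsuppJ (fun p : K * bool => if p.2 then 0 else a p.1).
    exists (List.map (fun x => (x, false)) s) => [[x b]] hx /=.
    case: b hx => // hx; apply: hs => hh; apply: hx.
    by apply: (List.in_map (fun x => (x, false))).
  have := hg (exist _ _ hf).
  rewrite /h /= => <-.
  rewrite -(lin0 gl); congr g.
Qed.
End Main3.

End Part6.
Import Part6.

Module Part7.
Local Open Scope ring_scope.

Section Main4.
Variables (k : fieldType) (K : Type) (HK : infinite_type K)
    (T : SMod (prodRing K k)) (pi : regmod (prodRing K k) -> T)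
    (pi_lin : Rlinear pi) (pi_surj : Rsurjective pi)
    (pi_ker : forall r, pi r = mzero <-> finite_support r).
Notation R := (prodRing K k).

Lemma exists_out (L : list K) : exists x, ~ In x L.
Proof.
case: (classic (exists x, ~ In x L)) => // h; exfalso; apply: HK; exists L => x.
by case: (classic (In x L)) => // hx; case: h; exists x.
Qed.

Lemma ex_eval x c y : (ex x c : R) y = if dec (y = x) then c else 0. Proof. by []. Qed.

Lemma fin_gen : finitely_generated T.
Proof.
exists 1%N, (fun _ => pi rone) => m.
have [r <-] := pi_surj m.
exists (fun _ => r); rewrite /= madd0 -(proj2 pi_lin); congr pi.
by apply: functional_extensionality => i /=; rewrite mulr1.
Qed.

Lemma not_proj : ~ projective T.
Proof.
move=> hp.
have [h' [hl hh]] := hp (regmod R) T pi id pi_lin pi_surj (conj (fun _ _ => erefl) (fun _ _ => erefl)).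
pose u : R := h' (pi rone).
have u0 : u = rzero.
  apply: functional_extensionality => x.
  have f1 : finite_support (ex x 1 : R).
    exists [:: x] => y hy; rewrite ex_eval; case: (dec (y = x)) => [e|e] //=.
    by case: hy; left.
  have e1 : pi (ex x 1) = mzero by apply/pi_ker.
  have e2 : pi (ex x 1) = mscal (ex x 1) (pi rone).
    rewrite -(proj2 pi_lin); congr pi; apply: functional_extensionality => y /=.
    by rewrite mulr1.
  have := f_equal h' e2; rewrite e1 (lin0 hl) (proj2 hl) => e3.
  have := f_equal (fun f : R => f x) e3; rewrite /= ex_eval.
  by case: (dec (x = x)) => [e|e] /=; [rewrite mul1r => ->|case: e].
have : pi rone = mzero by rewrite -(hh (pi rone)) -/u u0; exact: (lin0 pi_lin).
move=> /pi_ker [s hs]; apply: HK; exists s => x.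
by case: (classic (In x s)) => // hx; have := hs x hx; rewrite roneE; move/eqP; rewrite oner_eq0.
Qed.

Lemma mlcR_eval n (c b : nat -> R) x :
  (mlc (M := regmod R) n c b : R) x = \sum_(i < n) c i x * b i x.
Proof.
elim: n => [|n IH] /=; first by rewrite big_ord0.
by rewrite big_ord_recr /= -IH.
Qed.

Lemma rsum_eval p (f : nat -> R) x : rsum p f x = \sum_(j < p) f j x.
Proof.
elim: p => [|p IH] /=; first by rewrite big_ord0.
by rewrite big_ord_recr /= -IH.
Qed.

Lemma mlc_pi n c (b : nat -> R) :
  mlc n c (fun i => pi (b i)) = pi (mlc (M := regmod R) n c b).
Proof.
elim: n => [|n IH] /=; first by rewrite (lin0 pi_lin).
by rewrite IH (proj1 pi_lin) (proj2 pi_lin).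
Qed.

Lemma not_fp : ~ finitely_presented T.
Proof.
move=> [n [g [gen [p [rels [hrel hsyz]]]]]].
pose b i := proj1_sig (constructive_indefinite_description _ (pi_surj (g i))).
have hb : g = fun i => pi (b i).
  apply: functional_extensionality => i.
  by rewrite (proj2_sig (constructive_indefinite_description _ (pi_surj (g i)))).
rewrite hb in gen hrel hsyz.
have [c' hc'] := gen (pi rone).
rewrite mlc_pi in hc'.
have [s0 hs0] := pi_eq pi_lin pi_ker hc'.
have hF : forall q, (q <= p)%N -> exists F : list K, forall j, (j < q)%N ->
    forall x, ~ In x F -> (mlc (M := regmod R) n (rels j) b : R) x = 0.
  elim => [|q IH] hq; first by exists nil.
  have [F hF] := IH (ltnW hq).
  have := hrel q hq; rewrite mlc_pi => /pi_ker [s hs].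
  exists (F ++ s)%list => j hj x hx.
  move: hj; rewrite ltnS leq_eqVlt => /orP [/eqP ->|hj].
    by apply: hs => hh; apply: hx; apply: in_or_app; right.
  by apply: hF => // hh; apply: hx; apply: in_or_app; left.
have [F hFp] := hF p (leqnn p).
have [x hx] := exists_out (F ++ s0)%list.
pose c i : R := rmul (ex x 1) (c' i).
have hc0 : mlc n c (fun i => pi (b i)) = mzero.
  rewrite mlc_pi; apply/pi_ker; exists [:: x] => y hy.
  rewrite mlcR_eval big1 // => i _; rewrite /c rmulE ex_eval.
  case: (dec (y = x)) => [e|e] /=; last by rewrite !mul0r.
  by case: hy; left.
have [s hs] := hsyz c hc0.
have w1 : (mlc (M := regmod R) n c' b : R) x = 1.
  have := hs0 x (fun hh => hx (in_or_app _ _ _ (or_intror hh))).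
  by rewrite raddE roneE roppE => /eqP; rewrite subr_eq0 => /eqP <-.
have V1 : (mlc (M := regmod R) n c b : R) x = 1.
  rewrite -w1 !mlcR_eval; apply: eq_bigr => i _; rewrite /c rmulE ex_eval.
  by case: (dec (x = x)) => [e|e] /=; [rewrite mul1r|case: e].
have V0 : (mlc (M := regmod R) n c b : R) x = 0.
  rewrite mlcR_eval.
  transitivity (\sum_(i < n) \sum_(j < p) s j x * (rels j i x * b i x)).
    apply: eq_bigr => i _; rewrite (hs i (ltn_ord i)) rsum_eval mulr_suml.
    by apply: eq_bigr => j _; rewrite rmulE mulrA.
  rewrite exchange_big big1 // => j _.
  rewrite -mulr_sumr -mlcR_eval hFp ?mulr0 //.
  by move=> hh; apply: hx; apply: in_or_app; left.
by move: (oner_neq0 k); rewrite -V1 V0 eqxx.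
Qed.
End Main4.

End Part7.
Import Part7.

Theorem mainTheorem14 (k : fieldType) (K : Type) (HK : infinite_type K)
    (T : SMod (prodRing K k)) (pi : regmod (prodRing K k) -> T)
    (pi_lin : Rlinear pi) (pi_surj : Rsurjective pi)
    (pi_ker : forall r, pi r = mzero <-> finite_support r) :
  gabriel_filter (@Gcof K k) /\ finite_type (@Gcof K k) /\
  silting T /\
  (forall X : SMod (prodRing K k), Gen T X <-> Div (@Gcof K k) X) /\
  finitely_generated T /\ ~ finitely_presented T /\ ~ projective T.
Proof.
split; first exact: gab.
split; first exact: fintype_G.
split; first exact: (silt pi_lin pi_surj pi_ker).
split.
  move=> X; split => h.
    apply: Ann_Div; exact: (Gen_Ann pi_lin pi_surj pi_ker h).
  apply: (Ann_Gen pi_lin pi_surj pi_ker); exact: Div_Ann.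
split; first exact: (fin_gen pi_lin pi_surj).
split; first exact: (not_fp HK pi_lin pi_surj pi_ker).
exact: (not_proj HK pi_lin pi_surj pi_ker).
Qed.
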